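(* There is a numerical constant $C>0$ such that the following holds. Let $\delta\in[0,1]$, $h\in(0,1/2]$, $(u,w)\in\mathcal A_\delta$, $E_h=E_h(u,w)$, and let $0<s\le t\le\frac12$. Then \[ \|w'\|_{L^1([0,s])}\le\frac sh E_h^{1/2},\qquad \|w'\|_{L^1([s,t])}\le C\,t^{1/2}\Big(1+\log\frac1s\Big)^{1/4}E_h^{1/4}+2t . \]
   Context: Let $B_1=\{x\in\mathbb R^2:|x|<1\}$. For scalar functions $u,w$ on $(0,1)$ define $U(x)=\frac12(u(|x|)-|x|)\frac{x}{|x|}$ and $W(x)=w(|x|)$. For $\delta\in[0,1]$ let $\mathcal A_\delta$ be the set of pairs $(u,w)$ with $(U,W)\in W^{1,2}(B_1;\mathbb R^2)\times W^{2,2}(B_1)$, $w(0)=0$, $w(1)=1-\delta$. For $h>0$, \[ E_h(u,w)=\int_0^1\frac{u^2}{r}+r(u'+w'^2-1)^2+h^2\Big(rw''^2+\frac{w'^2}{r}\Big)dr . \] *)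

(* Defs.v *)
From HB Require Import structures.
From mathcomp Require Import all_boot all_order all_algebra.
From mathcomp Require Import all_classical all_reals all_analysis.
Set Implicit Arguments. Unset Strict Implicit. Unset Printing Implicit Defensive.
Import Order.TTheory GRing.Theory Num.Theory numFieldNormedType.Exports.
Local Open Scope classical_set_scope.
Local Open Scope ring_scope.

Section Defs.
Context {R : realType}.
Local Notation mu := (@lebesgue_measure R).

(* [f] is locally absolutely continuous on (0,1) with a.e. derivative [df]:
   for every compact [a,b] in (0,1), df is integrable there and
   f b - f a = int_a^b df. *)
Definition loc_ac01 (f df : R -> R) : Prop :=
  forall a b : R, 0 < a -> a <= b -> b < 1 ->
    mu.-integrable `[a, b] (EFin \o df) /\
    f b - f a = Rintegral mu `[a, b] df.

(* U(x) = 1/2 (u(|x|) - |x|) x/|x| belongs to W^{1,2}(B_1;R^2), written in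
   polar coordinates: with g = (u - r)/2, |U|^2 = g^2 and
   |grad U|^2 = g'^2 + g^2/r^2, and dx = r dr dtheta. *)
Definition radial_W12 (u du : R -> R) : Prop :=
  mu.-integrable `]0, 1[
    (fun r => (((du r - 1) / 2) ^+ 2 * r
               + ((u r - r) / 2) ^+ 2 / r
               + ((u r - r) / 2) ^+ 2 * r)%:E).

(* W(x) = w(|x|) belongs to W^{2,2}(B_1), written in polar coordinates:
   |D^2 W|^2 = w''^2 + w'^2/r^2, |grad W|^2 = w'^2. *)
Definition radial_W22 (w dw d2w : R -> R) : Prop :=
  mu.-integrable `]0, 1[
    (fun r => ((d2w r) ^+ 2 * r + (dw r) ^+ 2 / r
               + (dw r) ^+ 2 * r + (w r) ^+ 2 * r)%:E).

Definition admissible (delta : R) (u w du dw d2w : R -> R) : Prop :=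
  loc_ac01 u du /\ loc_ac01 w dw /\ loc_ac01 dw d2w /\
  radial_W12 u du /\ radial_W22 w dw d2w /\
  {within `[0%R, 1%R] : set R, continuous w} /\ w 0 = 0 /\ w 1 = 1 - delta.

Definition energy (h : R) (u du dw d2w : R -> R) : \bar R :=
  (\int[mu]_(r in `]0%R, 1%R[)
     ((u r) ^+ 2 / r + r * (du r + (dw r) ^+ 2 - 1) ^+ 2
      + h ^+ 2 * (r * (d2w r) ^+ 2 + (dw r) ^+ 2 / r))%:E)%E.

End Defs.

(* Main.v *)
Require Import Defs.
From HB Require Import structures.
From mathcomp Require Import all_boot all_order all_algebra.
From mathcomp Require Import all_classical all_reals all_analysis.
From mathcomp Require Import ring lra measurable_realfun.
Import Order.TTheory GRing.Theory Num.Theory numFieldNormedType.Exports.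
Local Open Scope classical_set_scope.
Local Open Scope ring_scope.


Section Helpers.
Context {R : realType}.
Local Notation mu := (@lebesgue_measure R).

Lemma int_mono (D1 D2 : set R) (f g : R -> \bar R) :
  (forall x, D1 x -> 0 <= f x)%E -> (forall x, D2 x -> 0 <= g x)%E ->
  (forall x, D1 x -> D2 x /\ (f x <= g x)%E) ->
  (\int[mu]_(x in D1) f x <= \int[mu]_(x in D2) g x)%E.
Proof.
move=> f0 g0 fg; rewrite [X in (X <= _)%E]ge0_integralE // [X in (_ <= X)%E]ge0_integralE //.
apply: le_ereal_sup => _ /= [h hle <-]; exists h => // x.
apply: le_trans (hle x) _; rewrite /patch.
case: ifPn => [/set_mem D1x|_].
  by have [D2x fgx] := fg x D1x; rewrite mem_set.
by case: ifPn => [/set_mem D2x|_]; [exact: g0|].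
Qed.

Lemma amgm_le (X B c : R) : 0 <= B -> 0 <= c ->
  (forall l, 0 < l -> X <= l * B + c / l) -> X <= 2 * Num.sqrt (B * c).
Proof.
move=> B0 c0 H.
have [Bz|Bp] := eqVneq B 0.
  rewrite Bz mul0r sqrtr0 mulr0; rewrite leNgt; apply/negP => X0.
  have l0 : 0 < (c + 1) / X by apply: divr_gt0 => //; lra.
  have := H _ l0; rewrite Bz mulr0 add0r invf_div.
  have -> : c * (X / (c + 1)) = X * (c / (c + 1)) by rewrite mulrCA.
  have : c / (c + 1) < 1 by rewrite ltr_pdivrMr; lra.
  move=> h1; rewrite leNgt => /negP; apply.
  by rewrite -[ltRHS]mulr1 ltr_pM2l.
have {}Bp : 0 < B by rewrite lt_def Bp.
have [cz|cp] := eqVneq c 0.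
  rewrite cz mulr0 sqrtr0 mulr0; rewrite leNgt; apply/negP => X0.
  have l0 : 0 < X / (2 * B) by apply: divr_gt0 => //; lra.
  have := H _ l0; rewrite cz mul0r addr0.
  have -> : X / (2 * B) * B = X / 2 by field; lra.
  lra.
have {}cp : 0 < c by rewrite lt_def cp.
have sB : 0 < Num.sqrt B by rewrite sqrtr_gt0.
have sc : 0 < Num.sqrt c by rewrite sqrtr_gt0.
have l0 : 0 < Num.sqrt c / Num.sqrt B by apply: divr_gt0.
have := H _ l0.
have eB : B = Num.sqrt B ^+ 2 by rewrite sqr_sqrtr // ltW.
have ec : c = Num.sqrt c ^+ 2 by rewrite sqr_sqrtr // ltW.
rewrite sqrtrM ?(ltW Bp) //.
have -> : Num.sqrt c / Num.sqrt B * B + c / (Num.sqrt c / Num.sqrt B)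
   = 2 * (Num.sqrt B * Num.sqrt c).
  rewrite {2}eB {2}ec; field; apply/andP; split; lra.
done.
Qed.

Lemma meas_oc (w dw : R -> R) (s : R) : loc_ac01 w dw -> 0 < s -> s < 1 ->
  measurable_fun `]0, s] dw.
Proof.
move=> hw s0 s1.
have -> : `]0, s]%classic = \bigcup_n `[s / n.+1%:R, s]%classic.
  apply/seteqP; split => x /=.
    rewrite in_itv /= => /andP[x0 xs].
    exists (Num.truncn (s / x)) => //=.
    have := truncn_itv (ltW (divr_gt0 s0 x0)) => /andP[_ h].
    rewrite in_itv /= xs andbT ler_pdivrMr ?ltr0n //.
    by rewrite ltr_pdivrMr // in h; rewrite mulrC ltW.
  move=> [n _]; rewrite /= !in_itv /= => /andP[h xs]; apply/andP; split => //.
  by apply: lt_le_trans h; apply: divr_gt0.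
apply/measurable_fun_bigcup => // n.
have a0 : 0 < s / n.+1%:R by apply: divr_gt0.
have as_ : s / n.+1%:R <= s.
  have h1 : 1 <= n.+1%:R :> R by rewrite ler1n.
  rewrite ler_pdivrMr ?ltr0n //; nra.
have [hi _] := hw _ _ a0 as_ s1.
by apply/measurable_EFinP; exact: (measurable_int mu hi).
Qed.

Lemma int_inv (a b : R) : 0 < a -> a < b ->
  (\int[mu]_(x in `[a, b]) (x^-1)%:E = (ln b - ln a)%:E)%E.
Proof.
move=> a0 ab.
rewrite (@continuous_FTC2 _ (fun x => x^-1) (@ln R)) ?EFinB //.
- apply: continuous_in_subspaceT => x; rewrite inE /= in_itv /= => /andP[ax _].
  by apply: inv_continuous; rewrite gt_eqF // (lt_le_trans a0).
- split.
  + move=> x; rewrite in_itv /= => /andP[ax _].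
    by apply: ex_derive; apply: is_derive1_ln; rewrite (lt_trans a0).
  + by apply: cvg_at_right_filter; apply: continuous_ln.
  + by apply: cvg_at_left_filter; apply: continuous_ln; rewrite (lt_trans a0).
- move=> x; rewrite in_itv /= => /andP[ax _].
  have x0 : 0 < x by rewrite (lt_trans a0).
  by rewrite derive1E; have [_ ->] := is_derive1_ln x0.
Qed.
End Helpers.


Section Helpers2.
Context {R : realType}.
Local Notation mu := (@lebesgue_measure R).

Lemma amgm_le_e (X : \bar R) (B c : R) : 0 <= B -> 0 <= c -> (0 <= X)%E ->
  (forall l : R, 0 < l -> (X <= (l * B + c / l)%:E)%E) ->
  (X <= (2 * Num.sqrt (B * c))%:E)%E.
Proof.
move=> B0 c0 X0 H.
have Xf : X \is a fin_num.
  by rewrite ge0_fin_numE //; apply: le_lt_trans (H 1 ltr01) _; exact: ltry.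
rewrite -(fineK Xf) lee_fin; apply: amgm_le => // l l0.
by rewrite -lee_fin fineK //; exact: H.
Qed.

Lemma amgm_pt (l x s d : R) : 0 < l -> 0 < x -> x <= s ->
  `|d| <= l * d ^+ 2 / (2 * x) + s / (2 * l).
Proof.
move=> l0 x0 xs.
have hd : `|d| ^+ 2 = d ^+ 2 by rewrite real_normK ?num_real.
have ad : 0 <= `|d| by [].
suff : `|d| <= l * d ^+ 2 / (2 * x) + x / (2 * l).
  move=> h; apply: le_trans h _; rewrite lerD2l ler_pM2r //.
  by rewrite invr_gt0 mulr_gt0.
have key : 2 * l * x * `|d| <= l ^+ 2 * `|d| ^+ 2 + x ^+ 2.
  have := sqr_ge0 (l * `|d| - x); rewrite sqrrB; lra.
have -> : l * d ^+ 2 / (2 * x) + x / (2 * l) =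
  (l ^+ 2 * `|d| ^+ 2 + x ^+ 2) / (2 * l * x).
  by rewrite hd; field; apply/andP; split; lra.
rewrite ler_pdivlMr; last by rewrite !mulr_gt0.
by rewrite mulrC.
Qed.
End Helpers2.


Lemma ln2_le1 {R : realType} : ln (2 : R) <= 1.
Proof.
have := expR_ge1Dx (ln (2 : R)); rewrite lnK; last by rewrite posrE.
move=> h; lra.
Qed.

Lemma ln_bound {R : realType} (s t : R) : 0 < s -> s <= t -> t <= 1 / 2 ->
  ln (3 * t / 2) - ln (s / 2) <= 1 + ln s^-1.
Proof.
move=> s0 st t12.
have h1 : ln (3 * t / 2) <= 0 by apply: ln_le0; lra.
have h2 : ln (s / 2) = ln s - ln 2.
  rewrite lnM ?posrE ?invr_gt0 //.
  by rewrite lnV // posrE.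
have h3 : ln s^-1 = - ln s by rewrite lnV // posrE.
have := @ln2_le1 R.
lra.
Qed.

Lemma inv_meas_cc {R : realType} (a b : R) : 0 < a ->
  measurable_fun `[a, b] (fun x : R => x^-1).
Proof.
move=> a0; apply: subspace_continuous_measurable_fun => //.
apply: continuous_in_subspaceT => x; rewrite inE /= in_itv /= => /andP[ax _].
by apply: inv_continuous; rewrite gt_eqF // (lt_le_trans a0).
Qed.

Lemma meas_cc {R : realType} (f df : R -> R) (a b : R) : loc_ac01 f df ->
  0 < a -> a <= b -> b < 1 -> measurable_fun `[a, b] df.
Proof.
move=> hf a0 ab b1; have [hi _] := hf _ _ a0 ab b1.
by apply/measurable_EFinP; exact: (measurable_int _ hi).
Qed.
Arguments meas_cc {R f df a b}.

Lemma mu_cc {R : realType} (a b : R) : a <= b ->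
  (@lebesgue_measure R) `[a, b]%classic = (b - a)%:E.
Proof.
move=> ab; have := @lebesgue_measure_itv R `[a, b]; rewrite /= lte_fin.
case: ifPn => [_ ->|]; first by rewrite EFinB.
rewrite -leNgt => ba.
have -> : b = a by apply/eqP; rewrite eq_le ab ba.
by rewrite subrr.
Qed.

Lemma int_cst_cc {R : realType} (a b k : R) : a <= b ->
  (@lebesgue_measure R).-integrable `[a, b] (EFin \o cst k).
Proof.
move=> ab; apply/integrableP; split; first exact/measurable_EFinP.
under eq_integral => x _ do rewrite (_ : `|(EFin \o cst k) x|%E = (`|k|)%:E) //.
rewrite integral_cst // [X in (_ * X)%E](_ : _ = (b - a)%:E); last exact: mu_cc.
rewrite -EFinM; exact: ltry.
Qed.

Lemma abs_le_sq {R : realType} (y K : R) : 0 <= K -> y ^+ 2 <= K ^+ 2 -> `|y| <= K.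
Proof.
move=> K0 h.
have a := normr_ge0 y.
have b : `|y| ^+ 2 = y ^+ 2 by rewrite real_normK ?num_real.
nra.
Qed.

Lemma sqrt_le_of {R : realType} (x y : R) : 0 <= y -> x <= y ^+ 2 -> Num.sqrt x <= y.
Proof.
move=> y0 h; rewrite -(ger0_norm y0) -sqrtr_sqr; exact: ler_wsqrtr.
Qed.

Section Arith.
Context {R : realType}.
Lemma abs_le_sq' (y K : R) : 0 <= K -> y ^+ 2 <= K ^+ 2 -> `|y| <= K.
Proof.
move=> K0 h.
have a := normr_ge0 y.
have b : `|y| ^+ 2 = y ^+ 2 by rewrite real_normK ?num_real.
nra.
Qed.

Lemma arithK (E t y : R) : 0 <= E -> 0 < t ->
  y ^+ 2 <= 4 * E + t ^+ 2 / 16 -> `|y| <= 2 * Num.sqrt E + t / 4.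
Proof.
move=> e0 t0 hy.
have sE := sqrtr_ge0 E.
apply: abs_le_sq'; first lra.
rewrite sqrrD exprMn sqr_sqrtr //.
have : 0 <= 2 * (2 * Num.sqrt E) * (t / 4) by apply: mulr_ge0; lra.
lra.
Qed.

Lemma arithG (G RF ts us ut a b t : R) : G = RF + ts - (ut - us) ->
  RF <= a * b -> `|us| <= 2 * a + t / 4 -> `|ut| <= 2 * a + t / 4 ->
  ts <= 3 * t / 2 -> 0 <= a -> 1 <= b -> G <= 5 * (a * b) + 2 * t.
Proof.
move=> -> hRF hus hut hts a0 b1.
have h1 : us <= `|us| := ler_norm us.
have h2 : - ut <= `|ut| by rewrite -normrN ler_norm.
have : a <= a * b by rewrite ler_peMr.
lra.
Qed.

Lemma sqrt_le_of' (x y : R) : 0 <= y -> x <= y ^+ 2 -> Num.sqrt x <= y.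
Proof.
move=> y0 h; rewrite -(ger0_norm y0) -sqrtr_sqr; exact: ler_wsqrtr.
Qed.

Lemma arith_final (G t s L E : R) : 0 < s -> s <= t -> 0 <= G -> 0 <= E ->
  1 <= L -> G <= 5 * (Num.sqrt E * Num.sqrt L) + 2 * t ->
  2 * Num.sqrt (G / 2 * ((t - s) / 2)) <=
  3 * Num.sqrt t * Num.sqrt (Num.sqrt L) * Num.sqrt (Num.sqrt E) + 2 * t.
Proof.
move=> s0 st G0 e0 L1 GB.
set P := Num.sqrt t; set Q := Num.sqrt (Num.sqrt L); set S := Num.sqrt (Num.sqrt E).
have P0 : 0 <= P by exact: sqrtr_ge0.
have Q0 : 0 <= Q by exact: sqrtr_ge0.
have S0 : 0 <= S by exact: sqrtr_ge0.
have eP : t = P ^+ 2 by rewrite sqr_sqrtr //; lra.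
have eQ : Num.sqrt L = Q ^+ 2 by rewrite sqr_sqrtr // sqrtr_ge0.
have eS : Num.sqrt E = S ^+ 2 by rewrite sqr_sqrtr // sqrtr_ge0.
rewrite eQ eS in GB.
have GB' : G <= 5 * (S ^+ 2 * Q ^+ 2) + 2 * P ^+ 2 by rewrite -eP.
have ts : t - s <= P ^+ 2 by rewrite -eP; lra.
have ts0 : 0 <= t - s by lra.
have -> : 2 * Num.sqrt (G / 2 * ((t - s) / 2)) = Num.sqrt (G * (t - s)).
  rewrite (_ : G / 2 * ((t - s) / 2) = (1 / 2) ^+ 2 * (G * (t - s))); last by field.
  by rewrite sqrtrM ?sqr_ge0 // sqrtr_sqr ger0_norm; [field|lra].
have pqs : 0 <= P * Q * S by rewrite !mulr_ge0.
apply: sqrt_le_of'.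
  have : 0 <= 3 * P * Q * S by rewrite -!mulrA mulr_ge0 // !mulr_ge0.
  lra.
have h1 : G * (t - s) <= (5 * (S ^+ 2 * Q ^+ 2) + 2 * P ^+ 2) * P ^+ 2.
  have e1 : G * (t - s) <= G * P ^+ 2 by rewrite ler_wpM2l.
  have e2 : G * P ^+ 2 <= (5 * (S ^+ 2 * Q ^+ 2) + 2 * P ^+ 2) * P ^+ 2.
    by rewrite ler_wpM2r // sqr_ge0.
  exact: le_trans e1 e2.
apply: le_trans h1 _.
rewrite eP.
clear -P0 Q0 S0 pqs.
have a1 := sqr_ge0 (P * Q * S).
have a2 : 0 <= P ^+ 2 * (P * Q * S) by rewrite mulr_ge0 // sqr_ge0.
have a3 := sqr_ge0 (P ^+ 2).
nra.
Qed.
End Arith.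

Ltac nz := repeat (apply/andP; split); try done; rewrite ?gt_eqF //.

Section Main.
Context {R : realType}.
Local Notation mu := (@lebesgue_measure R).
Variables (delta h : R) (u w du dw d2w : R -> R).
Hypothesis hadm : admissible delta u w du dw d2w.
Hypothesis hfin : (energy h u du dw d2w < +oo)%E.
Hypothesis hpos : 0 < h.

Let F (r : R) := u r ^+ 2 / r + r * (du r + dw r ^+ 2 - 1) ^+ 2
      + h ^+ 2 * (r * d2w r ^+ 2 + dw r ^+ 2 / r).
Let E := fine (energy h u du dw d2w).

Lemma F_ge0 r : 0 <= r -> 0 <= F r.
Proof.
move=> r0; rewrite /F; apply: addr_ge0; first apply: addr_ge0.
- by apply: divr_ge0 => //; exact: sqr_ge0.
- by apply: mulr_ge0 => //; exact: sqr_ge0.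
- apply: mulr_ge0; first exact: sqr_ge0.
  apply: addr_ge0; first by apply: mulr_ge0 => //; exact: sqr_ge0.
  by apply: divr_ge0 => //; exact: sqr_ge0.
Qed.

Lemma energyE : energy h u du dw d2w = E%:E.
Proof.
have e0 : (0 <= energy h u du dw d2w)%E.
  apply: integral_ge0 => x; rewrite /= in_itv /= => /andP[x0 _].
  by rewrite lee_fin; have := F_ge0 _ (ltW x0).
by rewrite /E fineK // ge0_fin_numE.
Qed.

Lemma E_ge0 : 0 <= E.
Proof.
by rewrite -lee_fin -energyE; apply: integral_ge0 => x; rewrite /= in_itv /= =>
  /andP[x0 _]; rewrite lee_fin; have := F_ge0 _ (ltW x0).
Qed.

Lemma F_bound (D : set R) (g : R -> R) :
  (forall x, D x -> [/\ 0 < x, x < 1, 0 <= g x & g x <= F x]) ->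
  (\int[mu]_(x in D) (g x)%:E <= E%:E)%E.
Proof.
move=> H; rewrite -energyE /energy; apply: int_mono.
- by move=> x /H[_ _ g0 _]; rewrite lee_fin.
- by move=> x; rewrite /= in_itv /= => /andP[x0 _]; rewrite lee_fin;
    have := F_ge0 _ (ltW x0).
- move=> x /H[x0 x1 _ gF]; split; first by rewrite /= in_itv /= x0 x1.
  by rewrite lee_fin.
Qed.


Lemma inv_meas (a b : R) : 0 <= a -> measurable_fun `]a, b] (fun x : R => x^-1).
Proof.
move=> a0; apply: subspace_continuous_measurable_fun => //.
apply: continuous_in_subspaceT => x; rewrite inE /= in_itv /= => /andP[ax _].
by apply: inv_continuous; rewrite gt_eqF // (le_lt_trans a0).
Qed.

Lemma part1 (s : R) : 0 < s -> s <= 1 / 2 ->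
  (\int[mu]_(x in `[0%R, s]) (`|dw x|)%:E <= (s / h * Num.sqrt E)%:E)%E.
Proof.
move=> s0 s12.
have hp := hpos.
have [_ [hw _]] := hadm.
have s1 : s < 1 by lra.
have mdw : measurable_fun `]0, s] dw := @meas_oc _ w dw s hw s0 s1.
have mabs : measurable_fun `]0, s] (fun x => (`|dw x|)%:E).
  by apply/measurable_EFinP; apply: measurableT_comp => //; exact: normr_measurable.
have mq : measurable_fun `]0, s] (fun x => h ^+ 2 * (dw x ^+ 2 / x)).
  apply: measurable_funM => //; apply: measurable_funM.
    exact: measurable_funX.
  exact: inv_meas.
rewrite -integral_itv_obnd_cbnd //.
have -> : s / h * Num.sqrt E = 2 * Num.sqrt (E / (2 * h ^+ 2) * (s ^+ 2 / 2)).
  rewrite (_ : E / (2 * h ^+ 2) * (s ^+ 2 / 2) = E * (s / (2 * h)) ^+ 2); last first.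
    by field; nz.
  rewrite sqrtrM ?E_ge0 // sqrtr_sqr ger0_norm; last first.
    by apply: divr_ge0; lra.
  by field; nz.
apply: amgm_le_e.
- by apply: divr_ge0; [exact: E_ge0|]; rewrite mulr_ge0 // sqr_ge0.
- by rewrite divr_ge0 // sqr_ge0.
- by apply: integral_ge0 => x _; rewrite lee_fin.
move=> l l0.
have h2 : 0 < h ^+ 2 by rewrite exprn_gt0.
have mI : measurable_fun `]0, s] (fun x => (h ^+ 2 * (dw x ^+ 2 / x))%:E).
  exact/measurable_EFinP.
have I0 : forall x, `]0, s]%classic x -> 0 <= h ^+ 2 * (dw x ^+ 2 / x).
  move=> x; rewrite /= in_itv /= => /andP[x0 _].
  by apply: mulr_ge0; [exact: ltW|apply: divr_ge0; [exact: sqr_ge0|exact: ltW]].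
apply: (le_trans (@int_mono _ `]0, s] `]0, s] (fun x => (`|dw x|)%:E) (fun x => ((l / (2 * h ^+ 2)) * (h ^+ 2 * (dw x ^+ 2 / x)) + s / (2 * l))%:E) _ _ _)).
  - by move=> x _; rewrite lee_fin.
  - move=> x /I0 hx; rewrite lee_fin; apply: addr_ge0.
      by apply: mulr_ge0 => //; apply: divr_ge0; lra.
    by apply: divr_ge0; lra.
  - move=> x hx; split => //; move: hx; rewrite /= in_itv /= => /andP[x0 xs].
    rewrite lee_fin.
    have -> : l / (2 * h ^+ 2) * (h ^+ 2 * (dw x ^+ 2 / x)) = l * dw x ^+ 2 / (2 * x).
      by field; nz.
    exact: amgm_pt.
under eq_integral => x _ do rewrite EFinD EFinM.
rewrite ge0_integralD //; last first.
- by move=> x _; rewrite lee_fin; apply: divr_ge0; lra.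
- apply: emeasurable_funM => //.
- move=> x /I0 hx; apply: mule_ge0; rewrite lee_fin //.
  by apply: divr_ge0; lra.
rewrite ge0_integralZl_EFin //; last by apply: divr_ge0; lra.
rewrite integral_cst //.
rewrite [X in ((s / (2 * l))%:E * X)%E](_ : _ = s%:E); last first.
  have := @lebesgue_measure_itv R `]0, s]; rewrite /= lte_fin s0 -EFinB subr0.
  exact.
set I := (\int[mu]_(x in _) _)%E.
have IE : (I <= E%:E)%E.
  apply: F_bound => x; rewrite /= in_itv /= => /andP[x0 xs].
  split => //; first lra.
    by apply: I0; rewrite /= in_itv /= x0 xs.
  have a1 : 0 <= u x ^+ 2 / x by apply: divr_ge0; [exact: sqr_ge0|exact: ltW].
  have a2 : 0 <= x * (du x + dw x ^+ 2 - 1) ^+ 2.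
    by apply: mulr_ge0; [exact: ltW|exact: sqr_ge0].
  have a3 : 0 <= h ^+ 2 * (x * d2w x ^+ 2).
    by apply: mulr_ge0; [exact: sqr_ge0|apply: mulr_ge0; [exact: ltW|exact: sqr_ge0]].
  rewrite /F mulrDr; lra.
have I0' : (0 <= I)%E by apply: integral_ge0 => x /I0; rewrite lee_fin.
have If : I \is a fin_num by rewrite ge0_fin_numE // (le_lt_trans IE) // ltry.
rewrite -(fineK If) -EFinM -EFinM -EFinD lee_fin.
have : fine I <= E by rewrite -lee_fin fineK.
have : 0 <= fine I by rewrite fine_ge0.
move=> a b.
have -> : l * (E / (2 * h ^+ 2)) = l / (2 * h ^+ 2) * E by field; nz.
have -> : s ^+ 2 / 2 / l = s / (2 * l) * s by field; nz.
rewrite lerD2r ler_pM2l //; apply: divr_gt0; lra.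
Qed.

Lemma pick (p q M : R) : 0 < p -> p < q -> q < 1 -> E < M * (q - p) / q ->
  exists x, p <= x <= q /\ u x ^+ 2 <= M.
Proof.
move=> p0 pq q1 H.
have [//|nex] := pselect (exists x, p <= x <= q /\ u x ^+ 2 <= M).
exfalso.
have e0 := E_ge0.
have q0 : 0 < q by lra.
have k0 : 0 < (q - p) / q by apply: divr_gt0; lra.
have M0 : 0 < M.
  have : 0 < M * ((q - p) / q) by rewrite mulrA; lra.
  by rewrite pmulr_lgt0.
have key : (\int[mu]_(x in `[p, q]) (M / q)%:E <= E%:E)%E.
  apply: F_bound => x; rewrite /= in_itv /= => /andP[px xq].
  have x0 : 0 < x by lra.
  have uM : M < u x ^+ 2.
    rewrite ltNge; apply/negP => uM; apply: nex; exists x; split => //.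
    by rewrite px xq.
  split => //; first lra.
    by apply: divr_ge0; lra.
  have a2 : 0 <= x * (du x + dw x ^+ 2 - 1) ^+ 2.
    by apply: mulr_ge0; [exact: ltW|exact: sqr_ge0].
  have a3 : 0 <= h ^+ 2 * (x * d2w x ^+ 2 + dw x ^+ 2 / x).
    apply: mulr_ge0; first exact: sqr_ge0.
    apply: addr_ge0; first by apply: mulr_ge0; [exact: ltW|exact: sqr_ge0].
    by apply: divr_ge0; [exact: sqr_ge0|exact: ltW].
  have a1 : M / q <= u x ^+ 2 / x.
    rewrite ler_pdivrMr // mulrAC ler_pdivlMr //.
    have : M * x <= M * q by rewrite ler_pM2l.
    have : M * q <= u x ^+ 2 * q by rewrite ler_pM2r // ltW.
    lra.
  rewrite /F; lra.
rewrite integral_cst // in key.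
move: key.
rewrite [X in ((M / q)%:E * X)%E](_ : _ = (q - p)%:E); last first.
  have := @lebesgue_measure_itv R `[p, q]; rewrite /= lte_fin pq -EFinB.
  exact.
rewrite -EFinM lee_fin => key.
have : M * (q - p) / q = M / q * (q - p) by rewrite mulrAC.
lra.
Qed.

Lemma intf_bound (a b : R) : 0 < a -> a < b -> b < 1 ->
  (\int[mu]_(x in `[a, b]) (`|du x + dw x ^+ 2 - 1|)%:E
     <= (Num.sqrt (E * (ln b - ln a)))%:E)%E.
Proof.
move=> a0 ab b1.
have hp := hpos.
have e0 := E_ge0.
have [hu [hw _]] := hadm.
have mdu := meas_cc hu a0 (ltW ab) b1.
have mdw := meas_cc hw a0 (ltW ab) b1.
have mf : measurable_fun `[a, b] (fun x => du x + dw x ^+ 2 - 1).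
  apply: measurable_funB => //; apply: measurable_funD => //.
  exact: measurable_funX.
have lab : ln a <= ln b by rewrite ler_ln ?posrE //; [exact: ltW|lra].
have -> : Num.sqrt (E * (ln b - ln a)) =
    2 * Num.sqrt (E / 2 * ((ln b - ln a) / 2)).
  rewrite (_ : E / 2 * ((ln b - ln a) / 2) = (1 / 2) ^+ 2 * (E * (ln b - ln a))).
    by rewrite [X in _ = 2 * X]sqrtrM ?sqr_ge0 // sqrtr_sqr ger0_norm; [field|lra].
  by field.
apply: amgm_le_e.
- by apply: divr_ge0; lra.
- by apply: divr_ge0; lra.
- by apply: integral_ge0 => x _; rewrite lee_fin.
move=> l l0.
have I0 : forall x, `[a, b]%classic x -> 0 <= x * (du x + dw x ^+ 2 - 1) ^+ 2.
  move=> x; rewrite /= in_itv /= => /andP[ax _].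
  by apply: mulr_ge0; [lra|exact: sqr_ge0].
have V0 : forall x, `[a, b]%classic x -> 0 <= x^-1.
  move=> x; rewrite /= in_itv /= => /andP[ax _].
  by rewrite invr_ge0; lra.
apply: (le_trans (@int_mono _ `[a, b] `[a, b] (fun x => (`|du x + dw x ^+ 2 - 1|)%:E)
  (fun x => ((l / 2) * (x * (du x + dw x ^+ 2 - 1) ^+ 2) + (1 / (2 * l)) * x^-1)%:E) _ _ _)).
- by move=> x _; rewrite lee_fin.
- move=> x hx; rewrite lee_fin; apply: addr_ge0.
    by apply: mulr_ge0; [apply: divr_ge0; lra|exact: I0].
  by apply: mulr_ge0; [apply: divr_ge0; lra|exact: V0].
- move=> x hx; split => //; move: hx; rewrite /= in_itv /= => /andP[ax xb].
  rewrite lee_fin.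
  have x0 : 0 < x by lra.
  have lx : 0 < l * x by apply: mulr_gt0.
  have := @amgm_pt R (l * x) 1 1 (du x + dw x ^+ 2 - 1) lx ltr01 (lexx _).
  have -> : l * x * (du x + dw x ^+ 2 - 1) ^+ 2 / (2 * 1) + 1 / (2 * (l * x))
      = l / 2 * (x * (du x + dw x ^+ 2 - 1) ^+ 2) + 1 / (2 * l) * x^-1.
    by field; nz.
  by [].
under eq_integral => x _ do rewrite EFinD (EFinM (l / 2)) (EFinM (1 / (2 * l))).
rewrite ge0_integralD //; last 4 first.
- by move=> x xD; have hx := I0 _ xD; apply: mule_ge0; rewrite lee_fin //; apply: divr_ge0; lra.
- apply: emeasurable_funM => //; apply/measurable_EFinP.
  by apply: measurable_funM => //; exact: measurable_funX.
- by move=> x xD; have hx := V0 _ xD; apply: mule_ge0; rewrite lee_fin //; apply: divr_ge0; lra.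
- apply: emeasurable_funM => //; apply/measurable_EFinP; exact: inv_meas_cc.
rewrite ge0_integralZl_EFin //; try (by apply: divr_ge0; lra);
  try (by move=> x xD; have := I0 _ xD; rewrite lee_fin);
  try (by apply/measurable_EFinP; apply: measurable_funM => //; exact: measurable_funX).
rewrite ge0_integralZl_EFin //; try (by apply: divr_ge0; lra);
  try (by move=> x xD; have := V0 _ xD; rewrite lee_fin);
  try (by apply/measurable_EFinP; exact: inv_meas_cc).
rewrite int_inv //.
set I := (\int[mu]_(x in _) _)%E.
have IE : (I <= E%:E)%E.
  apply: F_bound => x; rewrite /= in_itv /= => /andP[ax xb].
  have x0 : 0 < x by lra.
  split => //; first lra.
    by apply: I0; rewrite /= in_itv /= ax xb.
  have a1 : 0 <= u x ^+ 2 / x by apply: divr_ge0; [exact: sqr_ge0|exact: ltW].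
  have a3 : 0 <= h ^+ 2 * (x * d2w x ^+ 2 + dw x ^+ 2 / x).
    apply: mulr_ge0; first exact: sqr_ge0.
    apply: addr_ge0; first by apply: mulr_ge0; [exact: ltW|exact: sqr_ge0].
    by apply: divr_ge0; [exact: sqr_ge0|exact: ltW].
  rewrite /F; lra.
have I0' : (0 <= I)%E by apply: integral_ge0 => x xD; have := I0 _ xD; rewrite lee_fin.
have If : I \is a fin_num by rewrite ge0_fin_numE // (le_lt_trans IE) // ltry.
rewrite -(fineK If) -EFinM -EFinM -EFinD lee_fin.
have : fine I <= E by rewrite -lee_fin fineK.
have : 0 <= fine I by rewrite fine_ge0.
move=> c d.
have -> : l * (E / 2) = l / 2 * E by field.
have -> : (ln b - ln a) / 2 / l = 1 / (2 * l) * (ln b - ln a) by field; nz.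
rewrite lerD2r ler_pM2l //; apply: divr_gt0; lra.
Qed.

Lemma dw2_int (a b : R) : 0 < a -> a <= b -> b < 1 ->
  mu.-integrable `[a, b] (EFin \o (fun x => dw x ^+ 2)).
Proof.
move=> a0 ab b1.
have hp := hpos.
have [_ [hw _]] := hadm.
have mdw := meas_cc hw a0 ab b1.
have m2 : measurable_fun `[a, b] (fun x => dw x ^+ 2) by exact: measurable_funX.
have i1 : mu.-integrable `[a, b] (fun x => (h ^+ 2 * dw x ^+ 2)%:E).
  apply/integrableP; split.
    by apply/measurable_EFinP; apply: measurable_funM.
  under eq_integral => x _ do rewrite abse_EFin.
  apply: (le_lt_trans (y := E%:E)); last exact: ltry.
  apply: F_bound => x; rewrite /= in_itv /= => /andP[ax xb].
  have x0 : 0 < x by lra.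
  have q0 : 0 <= h ^+ 2 * dw x ^+ 2 by apply: mulr_ge0; exact: sqr_ge0.
  split; [done|lra|exact: normr_ge0|].
  rewrite ger0_norm //.
  have a1 : 0 <= u x ^+ 2 / x by apply: divr_ge0; [exact: sqr_ge0|exact: ltW].
  have a2 : 0 <= x * (du x + dw x ^+ 2 - 1) ^+ 2.
    by apply: mulr_ge0; [exact: ltW|exact: sqr_ge0].
  have a3 : 0 <= h ^+ 2 * (x * d2w x ^+ 2).
    by apply: mulr_ge0; [exact: sqr_ge0|apply: mulr_ge0; [exact: ltW|exact: sqr_ge0]].
  have a4 : h ^+ 2 * dw x ^+ 2 <= h ^+ 2 * (dw x ^+ 2 / x).
    rewrite ler_pM2l ?exprn_gt0 // ler_pdivlMr //; have := sqr_ge0 (dw x); nra.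
  rewrite /F mulrDr; lra.
have i2 : mu.-integrable `[a, b] (fun x => ((h ^+ 2)^-1)%:E * (h ^+ 2 * dw x ^+ 2)%:E)%E.
  by apply: integrableZl.
apply: eq_integrable i2 => // x _ /=; rewrite -EFinM mulrA mulVf ?mul1r //.
by rewrite gt_eqF // exprn_gt0.
Qed.

Lemma absdw_bound (s t G : R) : 0 < s -> s <= t -> t < 1 -> 0 <= G ->
  (\int[mu]_(x in `[s, t]) (dw x ^+ 2)%:E <= G%:E)%E ->
  (\int[mu]_(x in `[s, t]) (`|dw x|)%:E
   <= (2 * Num.sqrt (G / 2 * ((t - s) / 2)))%:E)%E.
Proof.
move=> s0 st t1 G0 AB.
have [_ [hw _]] := hadm.
have mdw := meas_cc hw s0 st t1.
  apply: amgm_le_e.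
- by apply: divr_ge0; lra.
- by apply: divr_ge0; lra.
- by apply: integral_ge0 => x _; rewrite lee_fin.
move=> l l0.
apply: (le_trans (@int_mono _ `[s, t] `[s, t] (fun x => (`|dw x|)%:E)
  (fun x => ((l / 2) * dw x ^+ 2 + 1 / (2 * l))%:E) _ _ _)).
- by move=> x _; rewrite lee_fin.
- move=> x _; rewrite lee_fin; apply: addr_ge0.
    by apply: mulr_ge0; [apply: divr_ge0; lra|exact: sqr_ge0].
  by apply: divr_ge0; lra.
- move=> x hx; split => //; rewrite lee_fin.
  have := @amgm_pt R l 1 1 (dw x) l0 ltr01 (lexx _).
  by have -> : l * dw x ^+ 2 / (2 * 1) = l / 2 * dw x ^+ 2 by field.
under eq_integral => x _ do rewrite EFinD (EFinM (l / 2)).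
rewrite ge0_integralD //;
  try (by move=> x _; apply: mule_ge0; rewrite lee_fin ?sqr_ge0 //; apply: divr_ge0; lra);
  try (by apply: emeasurable_funM => //; apply/measurable_EFinP; exact: measurable_funX);
  try (by move=> x _; rewrite lee_fin; apply: divr_ge0; lra).
rewrite ge0_integralZl_EFin //; try (by apply: divr_ge0; lra);
  try (by move=> x _; rewrite lee_fin sqr_ge0);
  try (by apply/measurable_EFinP; exact: measurable_funX).
rewrite integral_cst // [X in ((1 / (2 * l))%:E * X)%E](_ : _ = (t - s)%:E); last exact: mu_cc.
set I := (\int[mu]_(x in _) _)%E in AB *.
have I0 : (0 <= I)%E by apply: integral_ge0 => x _; rewrite lee_fin sqr_ge0.
have If : I \is a fin_num by rewrite ge0_fin_numE // (le_lt_trans AB) // ltry.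
rewrite -(fineK If) -EFinM -EFinM -EFinD lee_fin.
have : fine I <= G by rewrite -lee_fin fineK.
move=> c.
have -> : l * (G / 2) = l / 2 * G by field.
have -> : (t - s) / 2 / l = 1 / (2 * l) * (t - s) by field; nz.
rewrite lerD2r ler_pM2l //; apply: divr_gt0; lra.
Qed.

Lemma part2_pick (s t : R) : 0 < s -> s <= t -> t <= 1 / 2 ->
  exists s' t', [/\ s / 2 <= s' <= s, t <= t' <= 3 * t / 2,
    `|u s'| <= 2 * Num.sqrt E + t / 4 & `|u t'| <= 2 * Num.sqrt E + t / 4].
Proof.
move=> s0 st t12.
have e0 := E_ge0.
have t0 : 0 < t by lra.
have tt0 : 0 < t ^+ 2 by rewrite exprn_gt0.
have [s' [hs' us']] : exists x, s / 2 <= x <= s /\ u x ^+ 2 <= 4 * E + t ^+ 2 / 16.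
  apply: pick; [lra|lra|lra|].
  have -> : (4 * E + t ^+ 2 / 16) * (s - s / 2) / s = (4 * E + t ^+ 2 / 16) / 2.
    by field; nz.
  lra.
have [t' [ht' ut']] : exists x, t <= x <= 3 * t / 2 /\ u x ^+ 2 <= 4 * E + t ^+ 2 / 16.
  apply: pick; [lra|lra|lra|].
  have -> : (4 * E + t ^+ 2 / 16) * (3 * t / 2 - t) / (3 * t / 2)
     = (4 * E + t ^+ 2 / 16) / 3 by field; nz.
  lra.
by exists s', t'; split => //; apply: arithK.
Qed.

Lemma part2_G (s t s' t' : R) : 0 < s -> s <= t -> t <= 1 / 2 ->
  s / 2 <= s' <= s -> t <= t' <= 3 * t / 2 ->
  `|u s'| <= 2 * Num.sqrt E + t / 4 -> `|u t'| <= 2 * Num.sqrt E + t / 4 ->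
  \int[mu]_(x in `[s', t']) dw x ^+ 2 <=
    5 * (Num.sqrt E * Num.sqrt (1 + ln s^-1)) + 2 * t.
Proof.
move=> s0 st t12 /andP[ss1 ss2] /andP[tt1 tt2] us ut.
have e0 := E_ge0.
have [hu _] := hadm.
have s'0 : 0 < s' by lra.
have st' : s' <= t' by lra.
have t'1 : t' < 1 by lra.
have idw2 := dw2_int s' t' s'0 st' t'1.
have [idu ueq] := hu _ _ s'0 st' t'1.
set f := fun x => du x + dw x ^+ 2 - 1.
have idf1 : mu.-integrable `[s', t'] (EFin \o (fun x => du x + dw x ^+ 2)).
  have i3 : mu.-integrable `[s', t'] ((EFin \o du) \+ (EFin \o (fun x => dw x ^+ 2)%R))%E.
    exact: integrableD.
  by apply: eq_integrable i3 => // x _ /=; rewrite -EFinD.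
set G := \int[mu]_(x in `[s', t']) dw x ^+ 2.
have Geq : G = \int[mu]_(x in `[s', t']) f x + (t' - s') - (u t' - u s').
  rewrite ueq /f RintegralB //; last by exact: int_cst_cc.
  rewrite RintegralD // Rintegral_cst // [X in fine X](_ : _ = (t' - s')%:E); last exact: mu_cc.
  rewrite /= -/G. set A := Rintegral _ _ _. lra.
have lnb := ln_bound s t s0 st t12.
have L1 : 1 <= 1 + ln s^-1.
  have : 0 <= ln s^-1 by apply: ln_ge0; rewrite invf_ge1 //; lra.
  lra.
have Rf : \int[mu]_(x in `[s', t']) f x <= Num.sqrt E * Num.sqrt (1 + ln s^-1).
  rewrite -sqrtrM //.
  apply: le_trans (ler_norm _) _.
  apply: le_trans (le_normr_Rintegral _ _) _ => //.
    have i3 : mu.-integrable `[s', t'] ((EFin \o du) \+ (EFin \o (fun x => dw x ^+ 2)%R))%E.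
      exact: integrableD.
    have i4 : mu.-integrable `[s', t'] (((EFin \o du) \+ (EFin \o (fun x => dw x ^+ 2)%R)) \- (EFin \o cst 1%R))%E.
      by apply: integrableB => //; exact: int_cst_cc.
    by apply: eq_integrable i4 => // x _ /=; rewrite -EFinD -EFinB.
  have hI : (\int[mu]_(x in `[s', t']) (`|f x|)%:E
      <= (Num.sqrt (E * (ln (3 * t / 2) - ln (s / 2))))%:E)%E.
    apply: le_trans; last apply: (@intf_bound (s / 2) (3 * t / 2)); [|lra|lra|lra].
    apply: int_mono.
    - by move=> x _; rewrite lee_fin.
    - by move=> x _; rewrite lee_fin.
    - move=> x; rewrite /= !in_itv /= => /andP[x1 x2]; split => //.
      by apply/andP; split; lra.
  have I0 : (0 <= \int[mu]_(x in `[s', t']) (`|f x|)%:E)%E.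
    by apply: integral_ge0 => x _; rewrite lee_fin.
  have If : (\int[mu]_(x in `[s', t']) (`|f x|)%:E)%E \is a fin_num.
    by rewrite ge0_fin_numE // (le_lt_trans hI) // ltry.
  rewrite /Rintegral; rewrite -lee_fin fineK //; apply: le_trans hI _.
  rewrite lee_fin; apply: ler_wsqrtr; apply: ler_wpM2l => //.
have sL1 : 1 <= Num.sqrt (1 + ln s^-1) by rewrite -{1}sqrtr1; apply: ler_wsqrtr.
clear ueq.
set RF := (\int[mu]_(x in `[s', t']) f x) in Rf Geq.
apply: (@arithG R G RF (t' - s') (u s') (u t') (Num.sqrt E) (Num.sqrt (1 + ln s^-1)) t).
- exact: Geq.
- exact: Rf.
- exact: us.
- exact: ut.
- lra.
- exact: sqrtr_ge0.
- exact: sL1.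
Qed.

Lemma part2 (s t : R) : 0 < s -> s <= t -> t <= 1 / 2 ->
  (\int[mu]_(x in `[s, t]) (`|dw x|)%:E
     <= (3 * Num.sqrt t * Num.sqrt (Num.sqrt (1 + ln s^-1))
           * Num.sqrt (Num.sqrt E) + 2 * t)%:E)%E.
Proof.
move=> s0 st t12.
have e0 := E_ge0.
have t1 : t < 1 by lra.
have [s' [t' [hs' ht' us ut]]] := part2_pick s t s0 st t12.
have GB := part2_G s t s' t' s0 st t12 hs' ht' us ut.
move: hs' ht' => /andP[ss1 ss2] /andP[tt1 tt2].
have s'0 : 0 < s' by lra.
have st' : s' <= t' by lra.
have t'1 : t' < 1 by lra.
have idw2 := dw2_int s' t' s'0 st' t'1.
set G := \int[mu]_(x in `[s', t']) dw x ^+ 2 in GB.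
have G0 : 0 <= G by apply: Rintegral_ge0 => x _; exact: sqr_ge0.
have GE : G%:E = (\int[mu]_(x in `[s', t']) (dw x ^+ 2)%:E)%E.
  by rewrite /G /Rintegral fineK //; exact: (integrable_fin_num _ idw2).
have AB : (\int[mu]_(x in `[s, t]) (dw x ^+ 2)%:E <= G%:E)%E.
  rewrite GE; apply: int_mono.
  - by move=> x _; rewrite lee_fin sqr_ge0.
  - by move=> x _; rewrite lee_fin sqr_ge0.
  - move=> x; rewrite /= !in_itv /= => /andP[x1 x2]; split => //.
    by apply/andP; split; lra.
have hX := absdw_bound s t G s0 st t1 G0 AB.
apply: le_trans hX _; rewrite lee_fin.
apply: arith_final => //.
have : 0 <= ln s^-1 by apply: ln_ge0; rewrite invf_ge1 //; lra.
lra.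
Qed.

End Main.


Theorem lemma3p5 (R : realType) :
  exists C : R, 0 < C /\
  forall (delta h s t : R) (u w du dw d2w : R -> R),
    0 <= delta <= 1 ->
    0 < h <= 1 / 2 ->
    admissible delta u w du dw d2w ->
    (energy h u du dw d2w < +oo)%E ->
    0 < s -> s <= t -> t <= 1 / 2 ->
    let E := fine (energy h u du dw d2w) in
    (\int[lebesgue_measure]_(x in `[0%R, s]) (`|dw x|)%:E
       <= (s / h * Num.sqrt E)%:E)%E /\
    (\int[lebesgue_measure]_(x in `[s, t%R]) (`|dw x|)%:E
       <= (C * Num.sqrt t * Num.sqrt (Num.sqrt (1 + ln s^-1))
             * Num.sqrt (Num.sqrt E) + 2 * t)%:E)%E.
Proof.
exists 3; split; first lra.
move=> delta h s t u w du dw d2w _ /andP[h0 _] hadm hfin s0 st t12 E.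
split.
- have s12 : s <= 1 / 2 by lra.
  have := @part1 R delta h u w du dw d2w hadm hfin h0 s s0 s12; rewrite /E => H.
  exact H.
- have := @part2 R delta h u w du dw d2w hadm hfin h0 s t s0 st t12; rewrite /E => H.
  exact H.
Qed.
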